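(* Let $\alpha<_c\beta$ with $\beta/\!\!/\alpha$ an nc border strip with $n$ boxes, let $j\in NE(\beta/\!\!/\alpha)$, and let $w\in CRHW_n$ with $w(\alpha)=\beta$. Define $w'$ to be the unique reverse hookword with the same content as $w$ and with $\mathrm{leg}(w')=\mathrm{leg}(w)\setminus\{j\}$ if $j\in\mathrm{leg}(w)$, and $\mathrm{leg}(w')=\mathrm{leg}(w)\cup\{j\}$ if $j\notin\mathrm{leg}(w)$. Then $w'\in CRHW_n$ and $w'(\alpha)=\beta$.
   Context: A composition is a finite sequence $\alpha=(\alpha_1,\dots,\alpha_k)$ of positive integers; $\ell(\alpha)=k$; its diagram is the set of boxes $(i,j)$, $1\le i\le\ell(\alpha)$, $1\le j\le\alpha_i$, rows top to bottom, columns left to right. For compositions $\gamma=(\gamma_1,\dots,\gamma_l)$, $\delta$ write $\gamma\lessdot_c\delta$ if $\delta=(1,\gamma_1,\dots,\gamma_l)$ or $\delta=(\gamma_1,\dots,\gamma_k+1,\dots,\gamma_l)$ with $\gamma_i\ne\gamma_k$ for all $i<k$; $<_c$ is the transitive closure. For $\gamma<_c\delta$, $\delta/\!\!/\gamma$ consists of the boxes of $\delta$ other than $(\ell(\delta)-\ell(\gamma)+i,j)$, $1\le i\le\ell(\gamma)$, $1\le j\le\gamma_i$. $\mathrm{supp}(\beta/\!\!/\alpha)$ is the set of columns containing a box of $\beta/\!\!/\alpha$; interval shape: supp is a set of consecutive integers. nc border strip: an interval shape such that (1) if $(i,1),(i,2)\in\beta/\!\!/\alpha$ then $(i,1)$ is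 the bottommost box of column 1 of $\beta/\!\!/\alpha$, and (2) if $(i,j),(i,j+1)\in\beta/\!\!/\alpha$ with $j\ge2$ then $(i,j)$ is the topmost box of column $j$ of $\beta/\!\!/\alpha$. $NE(\beta/\!\!/\alpha)$ is the set of $j\in\mathrm{supp}(\beta/\!\!/\alpha)$ such that column $j+1$ of $\beta/\!\!/\alpha$ contains at least one box and $i_1<i_2$ for all boxes $(i_1,j+1),(i_2,j)\in\beta/\!\!/\alpha$. Box-adding operators: $\mathfrak t_1(\alpha)=(1,\alpha_1,\dots,\alpha_k)$; for $i\ge2$, $\mathfrak t_i(\alpha)$ increases the leftmost part equal to $i-1$ by $1$, and is $0$ if none; $\mathfrak t_i(0)=0$. A word $w=\mathfrak t_{i_1}\cdots\mathfrak t_{i_n}$ acts by $w(\alpha)=\mathfrak t_{i_1}(\cdots\mathfrak t_{i_n}(\alpha))$; it is a reverse $k$-hookword if $i_1\le\cdots\le i_{k+1}>i_{k+2}>\cdots>i_n$, with $\mathrm{leg}(w)=\{i_{k+1},\dots,i_n\}$ (a set of distinct integers containing the maximum index). Its content is the vector whose $i$-th entry is the number of occurrences of $\mathfrak t_i$ in $w$; a reverse hookword is determined by its content together with its leg. $w$ is connected if $\{i_1,\dots,i_n\}$ is a set of consecutive integers; $CRHW_n$ is the set of connected reverse hookwords of length $n$. *)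

(* Defs.v *)
From mathcomp Require Import all_boot.
Set Implicit Arguments. Unset Strict Implicit. Unset Printing Implicit Defensive.

Definition composition (a : seq nat) : bool := all (fun x => 0 < x) a.

Definition coverc (g d : seq nat) : bool :=
  (d == 1 :: g) ||
  has (fun k => (d == set_nth 0 g k (nth 0 g k).+1) &&
                all (fun i => nth 0 g i != nth 0 g k) (iota 0 k))
      (iota 0 (size g)).

Definition ltc (g d : seq nat) : Prop :=
  exists s : seq (seq nat), [/\ s != [::], path coverc g s & last g s = d].

(* Boxes are (row, column), both 1-based, rows top to bottom. *)
Definition in_skew (a b : seq nat) (x : nat * nat) : bool :=
  let: (r, c) := x in
  let d := size b - size a in
  [&& 0 < r <= size b, 0 < c <= nth 0 b r.-1
    & ~~ ((d < r) && (c <= nth 0 a (r - d).-1))].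

Definition skew (a b : seq nat) : seq (nat * nat) :=
  [seq x <- [seq (r, c) | r <- iota 1 (size b), c <- iota 1 (nth 0 b r.-1)]
     | in_skew a b x].

Definition in_supp (a b : seq nat) (j : nat) : bool :=
  has (fun x => x.2 == j) (skew a b).

Definition interval_shape (a b : seq nat) : Prop :=
  forall p q r, in_supp a b p -> in_supp a b q -> p <= r <= q -> in_supp a b r.

Definition nc_border_strip (a b : seq nat) : Prop :=
  [/\ interval_shape a b,
      (forall i, in_skew a b (i, 1) -> in_skew a b (i, 2) ->
         forall i', in_skew a b (i', 1) -> i' <= i)
    & (forall i j, 2 <= j -> in_skew a b (i, j) -> in_skew a b (i, j.+1) ->
         forall i', in_skew a b (i', j) -> i <= i')].

Definition in_NE (a b : seq nat) (j : nat) : Prop :=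
  [/\ in_supp a b j, in_supp a b j.+1 &
      forall i1 i2, in_skew a b (i1, j.+1) -> in_skew a b (i2, j) -> i1 < i2].

(* Box-adding operators; None plays the role of 0.  t_0 is not defined in the
   paper; we set it to 0 (None). *)
Definition top (i : nat) (a : seq nat) : option (seq nat) :=
  match i with
  | 0 => None
  | 1 => Some (1 :: a)
  | v.+1 => if v \in a then Some (set_nth 0 a (index v a) v.+1) else None
  end.

(* w = t_{i_1} ... t_{i_n} represented as [:: i_1; ...; i_n];
   w(a) = t_{i_1}( ... t_{i_n}(a)) *)
Definition act (w : seq nat) (a : seq nat) : option (seq nat) :=
  foldr (fun i acc => obind (top i) acc) (Some a) w.

(* reverse k-hookword: i_1 <= ... <= i_{k+1} > i_{k+2} > ... > i_n
   (0-based: the entries of index 0..k weakly increase, those of index k..n-1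
   strictly decrease); its leg is {i_{k+1},...,i_n} = drop k w. *)
Definition rev_khookword (k : nat) (w : seq nat) : bool :=
  [&& k < size w, sorted leq (take k.+1 w) & sorted (fun x y => y < x) (drop k w)].

Definition leg (k : nat) (w : seq nat) : seq nat := drop k w.

Definition content_eq (w w' : seq nat) : Prop :=
  forall i, count_mem i w' = count_mem i w.

Definition connected (w : seq nat) : Prop :=
  forall a b c, a \in w -> b \in w -> a <= c <= b -> c \in w.

(* w \in CRHW_n (the reverse k-hookword index k is given explicitly) *)
Definition CRHW (n k : nat) (w : seq nat) : Prop :=
  [/\ rev_khookword k w, connected w & size w = n].

(* Main.v *)
Require Import Defs.
From mathcomp Require Import all_boot zify.
Set Implicit Arguments. Unset Strict Implicit. Unset Printing Implicit Defensive.


Definition inv_ge (a Z : seq nat) :=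
  size a <= size Z /\ forall i, nth 0 a i <= nth 0 Z (i + (size Z - size a)).

Lemma inv_ge_refl a : inv_ge a a.
Proof. split=> // i; by rewrite subnn addn0. Qed.

Lemma top_cases x Z Z' : top x Z = Some Z' ->
  (x = 1 /\ Z' = 1 :: Z) \/
  (exists v, [/\ x = v.+2, v.+1 \in Z & Z' = set_nth 0 Z (index v.+1 Z) v.+2]).
Proof.
case: x => [|[|v]] //=; first by move=> [<-]; left.
case: ifP => // Hv [<-]; right; by exists v.
Qed.

Lemma size_set_idx v Z : v \in Z -> forall y, size (set_nth 0 Z (index v Z) y) = size Z.
Proof. by move=> Hv y; rewrite size_set_nth; apply/maxn_idPr; rewrite index_mem. Qed.

Lemma inv_ge_top a x Z Z' : inv_ge a Z -> top x Z = Some Z' -> inv_ge a Z'.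
Proof.
move=> [Hs Hn] /top_cases [[Ex ->]|[v [Ex Hm ->]]].
- split; first by rewrite /= leqW.
  move=> i; rewrite /= (subSn Hs) addnS /=; exact: Hn.
- rewrite /inv_ge size_set_idx //; split=> // i; apply: leq_trans (Hn i) _.
  rewrite nth_set_nth /=; case: ifP => // /eqP ->; by rewrite nth_index.
Qed.

Lemma step_fwd a x Z Z' r c : inv_ge a Z -> top x Z = Some Z' ->
  in_skew a Z (r, c) -> in_skew a Z' (r + (x == 1), c).
Proof.
move=> [Hs Hn] /top_cases [[Ex ->]|[v [Ex Hm ->]]].
- rewrite Ex /in_skew /= addn1; case: r => [|r] //=.
  by rewrite (subSn Hs) !ltnS subSS.
- rewrite Ex /in_skew /= addn0 size_set_idx //.
  case/and3P=> H1 /andP[H2 H3] H4; rewrite H1 H2 H4 /= andbT.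
  apply: leq_trans H3 _; rewrite nth_set_nth /=; case: ifP => // /eqP ->.
  by rewrite nth_index.
Qed.

Lemma step_new a x Z Z' : inv_ge a Z -> top x Z = Some Z' ->
  in_skew a Z' (if x == 1 then 1 else (index x.-1 Z).+1, x).
Proof.
move=> [Hs Hn] /top_cases [[Ex ->]|[v [Ex Hm ->]]].
- by rewrite Ex /in_skew /= (subSn Hs) ltnS ltn0.
- rewrite Ex /in_skew /= size_set_idx // ltnS index_mem Hm nth_set_nth /= eqxx /=.
  rewrite ltnSn /=; apply/negP=> /andP[H1 H2].
  have := Hn (index v.+1 Z - (size Z - size a)).
  rewrite subnK // nth_index //.
  rewrite subSn // /= in H2; lia.
Qed.

Lemma step_back a x Z Z' r c : inv_ge a Z -> top x Z = Some Z' ->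
  in_skew a Z' (r, c) -> c = x \/ exists r', in_skew a Z (r', c).
Proof.
move=> [Hs Hn] /top_cases [[Ex ->]|[v [Ex Hm ->]]]; subst x.
- rewrite /in_skew /=; case: r => [|[|r]] //=.
  + move=> H; left; move: H; rewrite (subSn Hs) /=; case/andP=> /andP[H1 H2] _; lia.
  + move=> H; right; exists r.+1; move: H.
    by rewrite (subSn Hs) !ltnS subSS.
- rewrite /in_skew /= size_set_idx // nth_set_nth /=.
  case: ifP => [/eqP Hr|_] H; last by right; exists r.
  case/and3P: H => H1 /andP[H2 H3] H4.
  case: (ltngtP c v.+2) => Hc; [|lia|by left].
  right; exists r; rewrite H1 H4 H2 /= andbT Hr nth_index //.
Qed.

Lemma act_cons x u Z : act (x :: u) Z = obind (top x) (act u Z).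
Proof. by []. Qed.

Lemma act_cat s1 s2 Z : act (s1 ++ s2) Z = obind (act s1) (act s2 Z).
Proof.
elim: s1 => [|x s1 IH] /=; first by case: (act s2 Z).
rewrite IH; by case: (act s2 Z).
Qed.

Lemma inv_ge_act a u Z Z' : inv_ge a Z -> act u Z = Some Z' -> inv_ge a Z'.
Proof.
elim: u Z' => [|x u IH] Z' H /=; first by case=> <-.
case E: (act u Z) => [Y|] //= Ht; apply: inv_ge_top Ht; exact: IH.
Qed.

Definition good (a : seq nat) (j : nat) (Z : seq nat) :=
  forall i1 i2, in_skew a Z (i1, j.+1) -> in_skew a Z (i2, j) -> i1 < i2.

Lemma good_top a j x Z Z' : inv_ge a Z -> top x Z = Some Z' -> good a j Z' -> good a j Z.
Proof.
move=> H Ht G i1 i2 H1 H2.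
have := G _ _ (step_fwd H Ht H1) (step_fwd H Ht H2); by rewrite ltn_add2r.
Qed.

Lemma good_act a j u Z Z' : inv_ge a Z -> act u Z = Some Z' -> good a j Z' -> good a j Z.
Proof.
elim: u Z' => [|x u IH] Z' H /=; first by case=> <-.
case E: (act u Z) => [Y|] //= Ht G; apply: (IH Y) => //.
apply: good_top Ht G; exact: inv_ge_act E.
Qed.

Lemma supp_word a u Z r c : act u a = Some Z -> in_skew a Z (r, c) -> c \in u.
Proof.
elim: u Z r => [|x u IH] Z r /=.
  case=> <-; rewrite /in_skew subnn /=; case/and3P=> /andP[H0 _] /andP[_ H] /=.
  by rewrite H0 subn0 H.
case E: (act u a) => [Y|] //= Ht H.
case: (step_back (inv_ge_act (inv_ge_refl a) E) Ht H) => [->|[r' H']].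
  by rewrite mem_head.
by rewrite in_cons (IH _ _ E H') orbT.
Qed.


Lemma idx_set_other (s : seq nat) p v y : p < size s -> nth 0 s p != y -> v != y ->
  index y (set_nth 0 s p v) = index y s.
Proof.
elim: s p => [|x s IH] [|p] //= Hp Hn Hv.
- by rewrite (negbTE Hv) (negbTE Hn).
- by rewrite IH.
Qed.

Lemma mem_set_other (s : seq nat) p v y : p < size s -> nth 0 s p != y -> v != y ->
  (y \in set_nth 0 s p v) = (y \in s).
Proof.
move=> Hp Hn Hv; rewrite -!index_mem idx_set_other // size_set_nth.
by rewrite (maxn_idPr Hp).
Qed.

Lemma idx_set_same (s : seq nat) p y : p < size s ->
  index y (set_nth 0 s p y) = minn (index y s) p.
Proof.
elim: s p => [|x s IH] [|p] //= Hp.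
- by rewrite eqxx minn0.
- case: eqP => _; first by rewrite min0n.
  by rewrite IH // minnSS.
Qed.

Lemma comm_gen j x V : 0 < j -> j.+1 < x ->
  obind (top x) (top j V) = obind (top j) (top x V).
Proof.
case: j => [|[|u]] // _.
- case: x => [|[|[|y]]] // _ /=.
  rewrite in_cons /=; case: ifP => //.
- case: x => [|[|y]] // Hx /=.
  case Hu: (u.+1 \in V); case Hy: (y.+1 \in V) => /=.
  + rewrite mem_set_other ?index_mem ?nth_index // ?Hy; try (apply/eqP; lia).
    rewrite /= mem_set_other ?index_mem ?nth_index // ?Hu; try (apply/eqP; lia).
    rewrite /= !idx_set_other ?index_mem ?nth_index //; try (apply/eqP; lia).
    rewrite set_set_nth; case: eqP => // E.
    have := nth_index 0 Hu; rewrite E nth_index //; lia.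
  + by rewrite mem_set_other ?index_mem ?nth_index // ?Hy; try (apply/eqP; lia).
  + by rewrite mem_set_other ?index_mem ?nth_index // ?Hu; try (apply/eqP; lia).
  + by [].
Qed.


Lemma step_new2 a v Z Z' : inv_ge a Z -> top v.+2 Z = Some Z' ->
  in_skew a Z' ((index v.+1 Z).+1, v.+2).
Proof. move=> H1 H2; exact: (step_new H1 H2). Qed.

Lemma step_new1 a Z Z' : inv_ge a Z -> top 1 Z = Some Z' -> in_skew a Z' (1, 1).
Proof. move=> H1 H2; exact: (step_new H1 H2). Qed.

Lemma step_fwd2 a v Z Z' r c : inv_ge a Z -> top v.+2 Z = Some Z' ->
  in_skew a Z (r, c) -> in_skew a Z' (r, c).
Proof. move=> H1 H2 H3; have := step_fwd H1 H2 H3; by rewrite addn0. Qed.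

Lemma step_fwd1 a Z Z' r c : inv_ge a Z -> top 1 Z = Some Z' ->
  in_skew a Z (r, c) -> in_skew a Z' (r.+1, c).
Proof. move=> H1 H2 H3; have := step_fwd H1 H2 H3; by rewrite addn1. Qed.

Lemma comm_a a j V B : 0 < j -> inv_ge a V ->
  obind (top j.+1) (top j V) = Some B -> good a j B ->
  obind (top j) (top j.+1 V) = Some B.
Proof.
case: j => [|[|u]] // _ HV.
- move=> H G; exfalso.
  have H1 : top 1 V = Some (1 :: V) by [].
  have H2 : top 2 (1 :: V) = Some B by rewrite -H.
  have N1 := step_new HV H1.
  have HV1 := inv_ge_top HV H1.
  have N2 := step_new HV1 H2.
  have F := step_fwd HV1 H2 N1.
  have := G _ _ N2 F; rewrite /=; by [].
- rewrite /=.
  case Hu: (u.+1 \in V) => //=.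
  set p := index u.+1 V; set q := index u.+2 V.
  have Hp : p < size V by rewrite index_mem.
  have Hpn : nth 0 V p = u.+1 by rewrite nth_index.
  have -> : (u.+2 \in set_nth 0 V p u.+2) = true.
    by apply/(nthP 0); exists p; rewrite ?nth_set_nth /= ?eqxx // size_set_nth (maxn_idPr Hp).
  rewrite idx_set_same // => -[HB] G.
  case: (ltnP q p) => Hqp.
  + rewrite (minn_idPl (ltnW Hqp)) in HB.
    have Hq : u.+2 \in V by rewrite -index_mem; apply: ltn_trans Hp.
    rewrite Hq /= mem_set_other ?index_mem ?nth_index // ?Hu; try (apply/eqP; lia).
    rewrite /= idx_set_other ?index_mem ?nth_index //; try (apply/eqP; lia).
    rewrite -HB set_set_nth; case: eqP => //; rewrite -/q; lia.
  + exfalso; rewrite (minn_idPr Hqp) in HB.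
    have H1 : top u.+2 V = Some (set_nth 0 V p u.+2) by rewrite /= Hu.
    have HV1 := inv_ge_top HV H1.
    have H2 : top u.+3 (set_nth 0 V p u.+2) = Some B.
      rewrite -HB /=.
      have -> : (u.+2 \in set_nth 0 V p u.+2) = true.
        by apply/(nthP 0); exists p; rewrite ?nth_set_nth /= ?eqxx // size_set_nth (maxn_idPr Hp).
      by rewrite idx_set_same // (minn_idPr Hqp).
    have N1 := step_new2 HV H1.
    have N2 := step_new2 HV1 H2.
    have F := step_fwd2 HV1 H2 N1.
    move: N2; rewrite idx_set_same // (minn_idPr Hqp) => N2.
    have := G _ _ N2 F; by rewrite ltnn.
Qed.

Lemma comm_b a j V B : 0 < j -> inv_ge a V ->
  obind (top j) (top j.+1 V) = Some B -> good a j B ->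
  obind (top j.+1) (top j V) = Some B.
Proof.
case: j => [|[|u]] // _ HV.
- case E: (top 2 V) => [V2|] //= [HB] G; exfalso.
  have H1 : top 1 V2 = Some B by rewrite -HB.
  have HV2 := inv_ge_top HV E.
  have N1 := step_new2 HV E.
  have F := step_fwd1 HV2 H1 N1.
  have N2 := step_new1 HV2 H1.
  have := G _ _ F N2; by [].
- case E: (top u.+3 V) => [V2|] //= H G.
  have E' := E; move: E' => /=.
  case Hq: (u.+2 \in V) => //= -[EV2].
  set p := index u.+1 V; set q := index u.+2 V.
  have Hqs : q < size V by rewrite index_mem.
  have Hqn : nth 0 V q = u.+2 by rewrite nth_index.
  move: H; rewrite -EV2 /= mem_set_other // ?Hqn //; try (apply/eqP; lia).
  case Hu: (u.+1 \in V) => //=.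
  rewrite idx_set_other ?Hqn //; try (apply/eqP; lia).
  rewrite -/p => -[HB].
  have Hp : p < size V by rewrite index_mem.
  have Hpn : nth 0 V p = u.+1 by rewrite nth_index.
  have Hpq : p != q by apply/eqP => E2; move: Hpn; rewrite E2 Hqn; lia.
  case: (ltnP q p) => Hqp.
  + have -> : (u.+2 \in set_nth 0 V p u.+2) = true.
      by apply/(nthP 0); exists p; rewrite ?nth_set_nth /= ?eqxx // size_set_nth (maxn_idPr Hp).
    rewrite idx_set_same // (minn_idPl (ltnW Hqp)) -HB set_set_nth.
    by rewrite -/q (negbTE Hpq).
  + exfalso.
    have Hqp' : p < q by rewrite ltn_neqAle Hpq.
    have H1 : top u.+2 V2 = Some B.
      rewrite -HB -EV2 /= mem_set_other ?Hqn ?Hu //; try (apply/eqP; lia).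
      by rewrite idx_set_other ?Hqn //; apply/eqP; lia.
    have HV2 := inv_ge_top HV E.
    have N1 := step_new2 HV E.
    have F := step_fwd2 HV2 H1 N1.
    have N2 := step_new2 HV2 H1.
    move: N2; rewrite -EV2 idx_set_other ?Hqn //; try (apply/eqP; lia).
    move=> N2; have := G _ _ F N2; rewrite -/p -/q; lia.
Qed.


Lemma comm_x_a a j x V B : 0 < j -> j < x -> inv_ge a V ->
  obind (top x) (top j V) = Some B -> good a j B ->
  obind (top j) (top x V) = Some B.
Proof.
move=> j0 jx HV; case: (ltngtP j.+1 x) => Hx.
- by rewrite comm_gen.
- lia.
- by rewrite -Hx; exact: comm_a.
Qed.

Lemma comm_x_b a j x V B : 0 < j -> j < x -> inv_ge a V ->
  obind (top j) (top x V) = Some B -> good a j B ->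
  obind (top x) (top j V) = Some B.
Proof.
move=> j0 jx HV; case: (ltngtP j.+1 x) => Hx.
- by rewrite (comm_gen V j0 Hx).
- lia.
- by rewrite -Hx; exact: comm_b.
Qed.

Lemma U_ab a j U : 0 < j -> all (fun x => j < x) U -> forall Y B, inv_ge a Y ->
  good a j B ->
  (obind (act U) (top j Y) = Some B <-> obind (top j) (act U Y) = Some B).
Proof.
move=> j0; elim: U => [|x U IH] /=.
  by move=> _ Y B _ _; case: (top j Y).
case/andP=> jx HU Y B HY G; split.
- case E1: (top j Y) => [Y1|] //=.
  case E2: (act U Y1) => [W|] //= E3.
  have HY1 := inv_ge_top HY E1.
  have HW := inv_ge_act HY1 E2.
  have GW := good_top HW E3 G.
  have := (IH HU Y W HY GW).1; rewrite E1 /= => /(_ E2).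
  case E4: (act U Y) => [V|] //= E5.
  apply: (comm_x_a j0 jx (inv_ge_act HY E4)) => //; by rewrite E5.
- case E4: (act U Y) => [V|] //=.
  case E5: (top x V) => [V2|] //= E6.
  have HV := inv_ge_act HY E4.
  have := comm_x_b j0 jx HV; rewrite E5 /= => /(_ _ E6 G).
  case E7: (top j V) => [W|] //= E8.
  have GW := good_top (inv_ge_top HV E7) E8 G.
  have := (IH HU Y W HY GW).2; rewrite E4 /= => /(_ E7).
  case: (top j Y) => [Y1|] //= ->; by [].
Qed.

Lemma swap a j A U L B : 0 < j -> all (fun x => j < x) U -> good a j B ->
  (act (A ++ U ++ j :: L) a = Some B <-> act (A ++ j :: U ++ L) a = Some B).
Proof.
move=> j0 HU G.
rewrite !act_cat !act_cons !act_cat.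
case EL: (act L a) => [Y|] //=.
have HY := inv_ge_act (inv_ge_refl a) EL.
split.
- case E1: (obind (act U) (top j Y)) => [Z|] //= EA.
  have HZ : inv_ge a Z.
    move: E1; case E2: (top j Y) => [Y1|] //= E3.
    exact: inv_ge_act (inv_ge_top HY E2) E3.
  have GZ := good_act HZ EA G.
  have := (U_ab j0 HU HY GZ).1 E1.
  case: (act U Y) => [V|] //= ->; by [].
- case E4: (act U Y) => [V|] //=.
  case E5: (top j V) => [Z|] //= EA.
  have HZ := inv_ge_top (inv_ge_act HY E4) E5.
  have GZ := good_act HZ EA G.
  have := (U_ab j0 HU HY GZ).2; rewrite E4 /= => /(_ E5) ->; by [].
Qed.


Definition gtr := fun x y : nat => y < x.

Lemma gtr_trans : transitive gtr.
Proof. move=> y x z; rewrite /gtr; lia. Qed.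

Lemma rkw_dec k w : rev_khookword k w -> exists arm h lg0,
  [/\ w = arm ++ h :: lg0, size arm = k, sorted leq (rcons arm h)
    & sorted (fun x y => y < x) (h :: lg0)].
Proof.
case/and3P=> Hk H1 H2.
exists (take k w), (nth 0 w k), (drop k.+1 w).
rewrite -(drop_nth 0 Hk) cat_take_drop (size_takel (ltnW Hk)).
by rewrite -(take_nth 0 Hk).
Qed.

Lemma leg_eq arm lg : leg (size arm) (arm ++ lg) = lg.
Proof. exact: drop_size_cat. Qed.

Lemma rkw_build arm h lg0 : sorted leq (rcons arm h) ->
  sorted (fun x y => y < x) (h :: lg0) ->
  rev_khookword (size arm) (arm ++ h :: lg0).
Proof.
move=> H1 H2; apply/and3P; split.
- by rewrite size_cat /= -addSnnS leq_addr.
- by rewrite take_cat ltnNge leqnSn /= subSnn /= take0 cats1.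
- by rewrite drop_size_cat.
Qed.

Lemma sorted_rcons_le (s : seq nat) h : sorted leq (rcons s h) -> sorted leq s.
Proof. apply: subseq_sorted; [exact: leq_trans | by rewrite -cats1 prefix_subseq]. Qed.

Lemma uniq_hw arm h lg0 arm' h' lg0' :
  sorted leq (rcons arm h) -> sorted (fun x y => y < x) (h :: lg0) ->
  sorted leq (rcons arm' h') -> sorted (fun x y => y < x) (h' :: lg0') ->
  perm_eq (arm ++ h :: lg0) (arm' ++ h' :: lg0') ->
  (h :: lg0) =i (h' :: lg0') ->
  arm ++ h :: lg0 = arm' ++ h' :: lg0'.
Proof.
move=> S1 S2 S3 S4 P E.
have EL : h :: lg0 = h' :: lg0'.
  apply: (irr_sorted_eq gtr_trans) => //; by move=> x; rewrite /gtr /= ltnn.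
rewrite -EL; congr (_ ++ _).
apply: (sorted_eq leq_trans anti_leq); [exact: sorted_rcons_le S1 | exact: sorted_rcons_le S3 |].
by rewrite -(perm_cat2r (h :: lg0)) {2}EL.
Qed.

Lemma all_le_last (s : seq nat) h : sorted leq (rcons s h) -> all (fun x => x <= h) s.
Proof.
elim: s => [|x s IH] //= H.
have := order_path_min leq_trans H; rewrite all_rcons => /andP[-> _] /=.
apply: IH; exact: path_sorted H.
Qed.

Lemma all_lt_head (s : seq nat) h : sorted (fun x y => y < x) (h :: s) -> all (fun x => x < h) s.
Proof. move=> H; exact: (order_path_min gtr_trans H). Qed.

Lemma sorted_catP (r : rel nat) s1 s2 : sorted r s1 -> sorted r s2 ->
  (forall x y, x \in s1 -> y \in s2 -> r x y) -> sorted r (s1 ++ s2).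
Proof.
case: s1 => [|x s1] //= H1 H2 H; rewrite cat_path H1 /=.
case: s2 H2 H => [|y s2] //= H2 H; rewrite H2 andbT.
apply: H; [exact: mem_last | exact: mem_head].
Qed.

Lemma split_leq (s : seq nat) j : sorted leq s -> exists s1 s2,
  [/\ s = s1 ++ s2, all (fun x => x <= j) s1 & all (fun x => j < x) s2].
Proof.
elim: s => [|x s IH] /=; first by move=> _; exists [::], [::].
rewrite (path_sortedE leq_trans) => /andP[Ha Hs].
case: (leqP x j) => Hx.
- have [s1 [s2 [-> H1 H2]]] := IH Hs; exists (x :: s1), s2; by rewrite /= Hx H1 H2.
- exists [::], (x :: s); split=> //=; rewrite Hx /=.
  apply/allP => y Hy; have := allP Ha y Hy; lia.
Qed.

Lemma split_leq_mem (s : seq nat) j : sorted leq s -> j \in s -> exists s1 s2,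
  [/\ s = s1 ++ j :: s2, all (fun x => x <= j) s1 & all (fun x => j < x) s2].
Proof.
elim: s => [|x s IH] //=.
rewrite (path_sortedE leq_trans) in_cons => /andP[Ha Hs] Hj.
case Hjs: (j \in s).
- have [s1 [s2 [-> H1 H2]]] := IH Hs Hjs; exists (x :: s1), s2; split=> //=.
  by rewrite H1 (allP Ha j Hjs).
- move: Hj; rewrite Hjs orbF => /eqP Ejx; subst x; exists [::], s; split=> //.
  apply/allP => y Hy; have := allP Ha y Hy; rewrite leq_eqVlt => /orP[/eqP E|//].
  by move: Hy; rewrite -E Hjs.
Qed.

Lemma split_gt_mem (s : seq nat) j : sorted (fun x y => y < x) s -> j \in s -> exists s1 s2,
  [/\ s = s1 ++ j :: s2, all (fun x => j < x) s1 & all (fun x => x < j) s2].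
Proof.
elim: s => [|x s IH] //=.
rewrite (path_sortedE gtr_trans) in_cons => /andP[Ha Hs] Hj.
case: (ltngtP x j) => Hx.
- exfalso; move: Hj; rewrite eq_sym (ltn_eqF Hx) /= => Hj.
  have := allP Ha j Hj; rewrite /gtr; lia.
- move: Hj; rewrite eq_sym (gtn_eqF Hx) /= => Hj.
  have [s1 [s2 [-> H1 H2]]] := IH Hs Hj; exists (x :: s1), s2; by rewrite /= Hx H1 H2.
- subst x; exists [::], s; split=> //.
Qed.

Lemma split_gt (s : seq nat) j : sorted (fun x y => y < x) s -> j \notin s -> exists s1 s2,
  [/\ s = s1 ++ s2, all (fun x => j < x) s1 & all (fun x => x < j) s2].
Proof.
elim: s => [|x s IH] /=; first by move=> _ _; exists [::], [::].
rewrite (path_sortedE gtr_trans) in_cons negb_or => /andP[Ha Hs] /andP[Hj Hjs].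
case: (ltngtP x j) => Hx.
- exists [::], (x :: s); split=> //=; rewrite Hx /=.
  apply/allP => y Hy; have := allP Ha y Hy; rewrite /gtr; lia.
- have [s1 [s2 [-> H1 H2]]] := IH Hs Hjs; exists (x :: s1), s2; by rewrite /= Hx H1 H2.
- by move: Hj; rewrite Hx eqxx.
Qed.

Lemma sorted_prefix (r : rel nat) s1 s2 : sorted r (s1 ++ s2) -> sorted r s1.
Proof. case: s1 => [|x s1] //=; by rewrite cat_path => /andP[]. Qed.

Lemma sorted_suffix (r : rel nat) s1 s2 : sorted r (s1 ++ s2) -> sorted r s2.
Proof. case: s1 => [|x s1] //=; rewrite cat_path => /andP[_]; exact: path_sorted. Qed.


Lemma supp_skew a b c : in_supp a b c -> exists r, in_skew a b (r, c).
Proof.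
case/hasP => [[r c'] /= Hx /eqP Ec]; subst c'; exists r.
by move: Hx; rewrite mem_filter => /andP[].
Qed.

Lemma in_skew_c a b r c : in_skew a b (r, c) -> 0 < c.
Proof. by case/and3P => _ /andP[]. Qed.

Lemma content_perm w w' : content_eq w w' -> perm_eq w w'.
Proof. move=> H; apply/allP => x _ /=; by rewrite H. Qed.

Lemma finish alpha beta n k w k2 w2 (newleg : nat -> bool) :
  CRHW n k w -> rev_khookword k2 w2 -> content_eq w w2 -> leg k2 w2 =i newleg ->
  act w2 alpha = Some beta ->
  (exists (w' : seq nat) (k' : nat),
      [/\ rev_khookword k' w', content_eq w w' & leg k' w' =i newleg])
  /\
  (forall (w' : seq nat) (k' : nat),
      rev_khookword k' w' -> content_eq w w' -> leg k' w' =i newleg ->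
      CRHW n k' w' /\ act w' alpha = Some beta).
Proof.
move=> [Hr Hc Hs] R2 C2 L2 A2; split; first by exists w2, k2.
move=> w' k' R' C' L'.
have P2 := content_perm C2; have P' := content_perm C'.
have Eq : w2 = w'.
  have [a2 [h2 [l2 [E2 K2 S21 S22]]]] := rkw_dec R2.
  have [a' [h' [l' [E' K' S1' S2']]]] := rkw_dec R'.
  have LL : leg k2 w2 =i leg k' w' by move=> x; rewrite L2 L'.
  move: LL; rewrite E2 E' -K2 -K' !leg_eq => LL.
  apply: uniq_hw => //.
  by rewrite -E2 -E'; apply: (perm_trans _ P'); rewrite perm_sym.
subst w2; split=> //; split=> //.
- move=> x y z; rewrite -!(perm_mem P'); exact: Hc.
- by rewrite -(perm_size P').
Qed.


Theorem mainTheorem16 (alpha beta : seq nat) (n j k : nat) (w : seq nat) :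
  composition alpha -> composition beta ->
  ltc alpha beta ->
  nc_border_strip alpha beta ->
  size (skew alpha beta) = n ->
  in_NE alpha beta j ->
  CRHW n k w ->
  act w alpha = Some beta ->
  let newleg := fun i : nat =>
    if j \in leg k w then (i \in leg k w) && (i != j)
    else (i \in leg k w) || (i == j) in
  (exists (w' : seq nat) (k' : nat),
      [/\ rev_khookword k' w', content_eq w w' & leg k' w' =i newleg])
  /\
  (forall (w' : seq nat) (k' : nat),
      rev_khookword k' w' -> content_eq w w' -> leg k' w' =i newleg ->
      CRHW n k' w' /\ act w' alpha = Some beta).
Proof.
move=> _ _ _ _ _ [Hsj Hsj1 G] Hw HA newleg.
have [r0 Hr0] := supp_skew Hsj.
have j0 : 0 < j := in_skew_c Hr0.
have jw : j \in w := supp_word HA Hr0.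
have [r1 Hr1] := supp_skew Hsj1.
have j1w : j.+1 \in w := supp_word HA Hr1.
have [Hrk Hcon Hsz] := Hw.
have [arm [h [lg0 [Ew Ek S1 S2]]]] := rkw_dec Hrk.
have legE : leg k w = h :: lg0 by rewrite Ew -Ek leg_eq.
have hmax : forall x, x \in w -> x <= h.
  move=> x; rewrite Ew mem_cat in_cons => /orP[Hx|/orP[/eqP->//|Hx]].
  - exact: (allP (all_le_last S1)).
  - apply: ltnW; exact: (allP (all_lt_head S2)).
have Sarm : sorted leq arm := sorted_rcons_le S1.
case jL: (j \in h :: lg0).
-
  have hj : j < h by have := hmax _ j1w.
  have [A1 [A2 [Earm HA1 HA2]]] := split_leq j Sarm.
  have [L1 [L2 [ELg HL1 HL2]]] := split_gt_mem S2 jL.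
  case: L1 ELg HL1 => [|h1 L1'] ELg HL1.
    by case: ELg => Eh _; move: hj; rewrite Eh ltnn.
  case: ELg => Eh1 Elg0; subst h1 lg0.
  move: HL1 => /= /andP[_ HL1].
  set U := A2 ++ h :: L1'.
  have HU : all (fun x => j < x) U.
    by rewrite all_cat; apply/andP; split; [exact: HA2 | rewrite /= hj; exact: HL1].
  have Ew1 : w = A1 ++ U ++ j :: L2 by rewrite Ew Earm /U -!catA.
  set w2 := A1 ++ j :: U ++ L2.
  have Ew2 : w2 = (A1 ++ j :: A2) ++ h :: (L1' ++ L2) by rewrite /w2 /U -!catA.
  apply: (finish (k2 := size (A1 ++ j :: A2)) (w2 := w2) Hw).
  + rewrite Ew2; apply: rkw_build.
    * rewrite rcons_cat /=.
      have SA : sorted leq (A1 ++ rcons A2 h) by rewrite -rcons_cat -Earm.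
      apply: sorted_catP.
      -- exact: sorted_prefix SA.
      -- apply: (sorted_catP (s1 := [:: j])) => //.
           exact: sorted_suffix SA.
         move=> x y; rewrite in_cons in_nil orbF => /eqP ->.
         rewrite mem_rcons in_cons => /orP[/eqP->|Hy]; first exact: ltnW.
         exact: ltnW (allP HA2 y Hy).
      -- move=> x y Hx; have Hxj := allP HA1 x Hx.
         rewrite in_cons mem_rcons in_cons => /or3P[/eqP->|/eqP->|Hy] //.
         ++ exact: leq_trans Hxj (ltnW hj).
         ++ exact: leq_trans Hxj (ltnW (allP HA2 y Hy)).
    * apply: (sorted_catP (s1 := h :: L1')).
      -- exact: (@sorted_prefix _ (h :: L1') _ S2).
      -- exact: path_sorted (@sorted_suffix _ (h :: L1') (j :: L2) S2).
      -- move=> x y Hx Hy.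
         have Hjx : j < x by move: Hx; rewrite in_cons => /orP[/eqP->//|Hx]; exact: allP HL1 x Hx.
         exact: ltn_trans (allP HL2 y Hy) Hjx.
  + move=> i; rewrite Ew1 /w2 /U !count_cat /=; congr (_ + _); rewrite !count_cat /=; by rewrite addnCA.
  + move=> i; rewrite Ew2 leg_eq /newleg legE jL [in RHS]unfold_in /=.
    case: (eqVneq i j) => [->|ne].
    * rewrite /= andbF; apply/negbTE.
      rewrite in_cons mem_cat negb_or; apply/andP; split; first by rewrite neq_ltn hj.
      rewrite negb_or; apply/andP; split; apply/negP => Hx.
      -- by have := allP HL1 j Hx; rewrite ltnn.
      -- by have := allP HL2 j Hx; rewrite ltnn.
    * by rewrite /= andbT !in_cons !mem_cat in_cons (negbTE ne).
  + have := @swap alpha j A1 U L2 beta j0 HU G; rewrite -Ew1 => -[H _]; exact: H HA.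
-
  have jarm : j \in arm by move: jw; rewrite Ew mem_cat jL orbF.
  have hj : j < h.
    have := hmax _ jw; rewrite leq_eqVlt => /orP[/eqP E|//]; by move: jL; rewrite E mem_head.
  have [A1 [A2 [Earm HA1 HA2]]] := split_leq_mem Sarm jarm.
  have [L1 [L2 [ELg HL1 HL2]]] := split_gt S2 (negbT jL).
  case: L1 ELg HL1 => [|h1 L1'] ELg HL1.
    exfalso; have hL2 : h \in L2 by rewrite -[L2]/([::] ++ L2) -ELg mem_head.
    have hlt := allP HL2 h hL2.
    by move: (ltn_trans hj hlt); rewrite ltnn.
  case: ELg => Eh1 Elg0; subst h1 lg0.
  move: HL1 => /= /andP[_ HL1].
  set U := A2 ++ h :: L1'.
  have HU : all (fun x => j < x) U.
    by rewrite all_cat; apply/andP; split; [exact: HA2 | rewrite /= hj; exact: HL1].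
  have Ew1 : w = A1 ++ j :: U ++ L2 by rewrite Ew Earm /U -!catA.
  set w2 := A1 ++ U ++ j :: L2.
  have Ew2 : w2 = (A1 ++ A2) ++ h :: (L1' ++ j :: L2) by rewrite /w2 /U -!catA.
  apply: (finish (k2 := size (A1 ++ A2)) (w2 := w2) Hw).
  + rewrite Ew2; apply: rkw_build.
    * rewrite rcons_cat.
      have SA : sorted leq (A1 ++ j :: rcons A2 h).
        by rewrite -[j :: rcons A2 h]/(rcons (j :: A2) h) -rcons_cat -Earm.
      apply: sorted_catP.
      -- exact: sorted_prefix SA.
      -- exact: path_sorted (sorted_suffix SA).
      -- move=> x y Hx; have Hxj := allP HA1 x Hx.
         rewrite mem_rcons in_cons => /orP[/eqP->|Hy].
         ++ exact: leq_trans Hxj (ltnW hj).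
         ++ exact: leq_trans Hxj (ltnW (allP HA2 y Hy)).
    * apply: (sorted_catP (s1 := h :: L1')).
      -- exact: (@sorted_prefix _ (h :: L1') _ S2).
      -- apply: (sorted_catP (s1 := [:: j])) => //.
           exact: (@sorted_suffix _ (h :: L1') L2 S2).
         move=> x y; rewrite in_cons in_nil orbF => /eqP -> Hy; exact: allP HL2 y Hy.
      -- move=> x y Hx Hy.
         have Hjx : j < x by move: Hx; rewrite in_cons => /orP[/eqP->//|Hx]; exact: allP HL1 x Hx.
         move: Hy; rewrite in_cons => /orP[/eqP->//|Hy].
         exact: ltn_trans (allP HL2 y Hy) Hjx.
  + move=> i; rewrite Ew1 /w2 /U !count_cat /=; congr (_ + _); rewrite !count_cat /=; by rewrite addnCA.
  + move=> i; rewrite Ew2 leg_eq /newleg legE jL [in RHS]unfold_in /= !in_cons !mem_cat !in_cons.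
    by case: (i == h); case: (i \in L1'); case: (i == j); case: (i \in L2).
  + have := @swap alpha j A1 U L2 beta j0 HU G; rewrite -Ew1 => -[_ H]; exact: H HA.
Qed.
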